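(* The Hausdorff dimension of the space $\mathcal G_2$ of marked groups on two generators satisfies $\dim_H(\mathcal G_2)\ge\log(2)/6$; in particular it is nonzero.
   Context: $\mathcal G_2$ is the set of normal subgroups of the free group $\mathbb F(a,b)$ (equivalently, marked groups with an ordered generating pair, up to marked isomorphism), endowed with the ultrametric $d(N_1,N_2)=e^{-\lambda}$ for $N_1\ne N_2$, where $\lambda$ is the minimal word length (with respect to $a,b$) of an element of $N_1\triangle N_2$. $\log$ is the natural logarithm. *)

(* Defs.v *)
From Stdlib Require Import Reals List Bool ClassicalEpsilon.
Import ListNotations.
Open Scope R_scope.

Inductive gen : Type := ga | gb.

Definition gen_eqb (x y : gen) : bool :=
  match x, y with ga, ga => true | gb, gb => true | _, _ => false end.

(** a letter is a generator with an exponent flag: (g,false) = g, (g,true) = g^-1 *)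
Definition letter : Type := (gen * bool)%type.
Definition word : Type := list letter.

Definition flip (l : letter) : letter := (fst l, negb (snd l)).

Definition cancels (l l' : letter) : bool :=
  gen_eqb (fst l) (fst l') && xorb (snd l) (snd l').

Fixpoint reduced (w : word) : Prop :=
  match w with
  | [] => True
  | l :: w' =>
      match w' with
      | [] => True
      | l' :: _ => cancels l l' = false /\ reduced w'
      end
  end.

Definition push (l : letter) (w : word) : word :=
  match w with
  | [] => [l]
  | l' :: w' => if cancels l l' then w' else l :: w
  end.
Definition reduce (w : word) : word := fold_right push [] w.

Definition fmul (u v : word) : word := reduce (u ++ v).
Definition finv (u : word) : word := rev (map flip u).

Record is_normal_subgroup (N : word -> Prop) : Prop := {
  ns_reduced : forall w, N w -> reduced w;
  ns_one : N [];
  ns_mul : forall u v, N u -> N v -> N (fmul u v);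
  ns_inv : forall u, N u -> N (finv u);
  ns_conj : forall g u, reduced g -> N u -> N (fmul (fmul g u) (finv g))
}.

Definition G2 : Type := { N : word -> Prop | is_normal_subgroup N }.

Definition same (N1 N2 : G2) : Prop :=
  forall w, proj1_sig N1 w <-> proj1_sig N2 w.

Definition agree (n : nat) (N1 N2 : G2) : Prop :=
  forall w, reduced w -> (length w < n)%nat ->
    (proj1_sig N1 w <-> proj1_sig N2 w).

Definition dist_spec (N1 N2 : G2) (r : R) : Prop :=
  (same N1 N2 /\ r = 0) \/
  (exists l : nat, agree l N1 N2 /\ ~ agree (S l) N1 N2 /\ r = exp (- INR l)).

Definition dist (N1 N2 : G2) : R :=
  epsilon (inhabits 0) (dist_spec N1 N2).

(** r^s with the convention 0^s = 0 (used only for s > 0) *)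
Definition hpow (r s : R) : R :=
  if Rlt_dec 0 r then Rpower r s else 0.

Definition hausdorff_null (s : R) (X : G2 -> Prop) : Prop :=
  forall delta eps : R, 0 < delta -> 0 < eps ->
  exists (U : nat -> G2 -> Prop) (r : nat -> R),
    (forall x, X x -> exists i, U i x) /\
    (forall i, 0 <= r i <= delta) /\
    (forall i x y, U i x -> U i y -> dist x y <= r i) /\
    (forall n, sum_f_R0 (fun i => hpow (r i) s) n <= eps).

(** dim_H(X) >= c, i.e. c is a lower bound of { s > 0 | H^s(X) = 0 }
    (dim_H X = inf of that set, inf of the empty set = +infinity) *)
Definition hausdorff_dim_ge (X : G2 -> Prop) (c : R) : Prop :=
  forall s, 0 < s -> hausdorff_null s X -> c <= s.

(* Main.v *)
Require Import Defs.
From Stdlib Require Import Reals.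
From Stdlib Require Import Lra Lia ZArith List Bool Classical ClassicalEpsilon FunctionalExtensionality.
Import ListNotations.
Open Scope R_scope.

Definition state : Type := (Z * (Z -> bool) * (nat -> bool))%type.
Definition updz (x : Z -> bool) (m : Z) : Z -> bool :=
  fun p => if Z.eqb p m then negb (x p) else x p.

Definition step (l : letter) (s : state) : state :=
  let '(m, x, f) := s in
  match l with
  | (ga, false) => ((m + 1)%Z, x, f)
  | (ga, true) => ((m - 1)%Z, x, f)
  | (gb, _) => (m, updz x m, fun j => xorb (f j) (x (m - Z.of_nat (S j))%Z))
  end.

Definition act (w : word) (s : state) : state := fold_left (fun s l => step l s) w s.

Lemma act_app u v s : act (u ++ v) s = act v (act u s).
Proof. unfold act; now rewrite fold_left_app. Qed.

Lemma act_cons l w s : act (l :: w) s = act w (step l s).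
Proof. reflexivity. Qed.

Lemma step_inv l s : step (flip l) (step l s) = s.
Proof.
  destruct l as [[|] [|]]; destruct s as [[m x] f]; simpl.
  - f_equal; f_equal; lia.
  - f_equal; f_equal; lia.
  - f_equal; [f_equal|].
    + apply functional_extensionality; intro p; unfold updz.
      destruct (Z.eqb p m); auto using negb_involutive.
    + apply functional_extensionality; intro j; unfold updz.
      match goal with |- context [Z.eqb ?a ?b] => destruct (Z.eqb_spec a b); [lia|] end.
      destruct (f j), (x _); reflexivity.
  - f_equal; [f_equal|].
    + apply functional_extensionality; intro p; unfold updz.
      destruct (Z.eqb p m); auto using negb_involutive.
    + apply functional_extensionality; intro j; unfold updz.
      match goal with |- context [Z.eqb ?a ?b] => destruct (Z.eqb_spec a b); [lia|] end.
      destruct (f j), (x _); reflexivity.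
Qed.

Lemma cancels_step l l' s : cancels l l' = true -> step l' (step l s) = s.
Proof.
  intro H. replace l' with (flip l) by
   (destruct l as [[|] [|]], l' as [[|] [|]]; simpl in H; try discriminate; reflexivity).
  apply step_inv.
Qed.

Lemma act_push l w s : act (push l w) s = act (l :: w) s.
Proof.
  destruct w as [|l' w]; [reflexivity|]. unfold push.
  destruct (cancels l l') eqn:E; [|reflexivity].
  rewrite !act_cons, (cancels_step l l' s E). reflexivity.
Qed.

Lemma act_reduce w s : act (reduce w) s = act w s.
Proof.
  revert s; induction w as [|l w IH]; intro s; [reflexivity|].
  simpl reduce. rewrite act_push, !act_cons. apply IH.
Qed.

Lemma reduced_tail l w : reduced (l :: w) -> reduced w.
Proof. destruct w; simpl; tauto. Qed.

Lemma reduced_push l w : reduced w -> reduced (push l w).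
Proof.
  destruct w as [|l' w]; simpl; [auto|].
  intro H. destruct (cancels l l') eqn:E.
  - exact (reduced_tail _ _ H).
  - simpl. split; auto.
Qed.

Lemma reduced_reduce w : reduced (reduce w).
Proof. induction w; simpl; auto using reduced_push. Qed.

Lemma length_push l w : (length (push l w) <= S (length w))%nat.
Proof. destruct w as [|l' w]; simpl; auto. destruct (cancels l l'); simpl; lia. Qed.

Lemma length_reduce w : (length (reduce w) <= length w)%nat.
Proof. induction w; simpl; auto. pose proof (length_push a (reduce w)). lia. Qed.

Lemma reduced_snoc w x : reduced w ->
  (forall y, last w y = y -> w <> [] -> True) ->
  (forall p y, w = p ++ [y] -> cancels y x = false) -> reduced (w ++ [x]).
Proof.
  intros Hw _. induction w as [|a w IH]; intro H; simpl; [exact I|].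
  destruct w as [|b w].
  - simpl. split; [apply (H []); reflexivity| exact I].
  - simpl in Hw |- *. destruct Hw as [Hab Hw]. split; [exact Hab|].
    apply IH; [exact Hw|]. intros p y Hp. apply (H (a :: p)). rewrite Hp. reflexivity.
Qed.

Lemma cancels_flip l l' : cancels (flip l') (flip l) = cancels l l'.
Proof. destruct l as [[|] [|]], l' as [[|] [|]]; reflexivity. Qed.

Lemma finv_cons l u : finv (l :: u) = finv u ++ [flip l].
Proof. unfold finv. simpl. reflexivity. Qed.

Lemma reduced_finv u : reduced u -> reduced (finv u).
Proof.
  induction u as [|l u IH]; intro H; [exact I|].
  rewrite finv_cons. apply reduced_snoc; [apply IH; exact (reduced_tail _ _ H)| auto|].
  intros p y Hp. destruct u as [|l' u].
  - unfold finv in Hp; simpl in Hp. destruct p; simpl in Hp; [discriminate| destruct p; discriminate].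
  - rewrite finv_cons in Hp. apply app_inj_tail in Hp. destruct Hp as [_ Hy]. subst y.
    rewrite cancels_flip. simpl in H. tauto.
Qed.

Lemma act_finv u s : act (finv u) (act u s) = s.
Proof.
  revert s; induction u as [|l u IH]; intro s; [reflexivity|].
  rewrite finv_cons, act_app, (act_cons l u), IH. simpl. apply step_inv.
Qed.

Definition addc (z : nat -> bool) (s : state) : state :=
  let '(m, x, f) := s in (m, x, fun j => xorb (f j) (z j)).

Lemma addc_addc z z' s : addc z' (addc z s) = addc (fun j => xorb (z j) (z' j)) s.
Proof.
  destruct s as [[m x] f]; simpl. f_equal. apply functional_extensionality; intro j.
  destruct (f j), (z j), (z' j); reflexivity.
Qed.

Lemma addc_invol z s : addc z (addc z s) = s.
Proof.
  destruct s as [[m x] f]; simpl. f_equal. apply functional_extensionality; intro j.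
  destruct (f j), (z j); reflexivity.
Qed.

Lemma step_addc l z s : step l (addc z s) = addc z (step l s).
Proof.
  destruct s as [[m x] f]; destruct l as [[|] [|]]; simpl; try reflexivity;
  f_equal; apply functional_extensionality; intro j;
  destruct (f j), (z j), (x _); reflexivity.
Qed.

Lemma act_addc w z s : act w (addc z s) = addc z (act w s).
Proof.
  revert s; induction w as [|l w IH]; intro s; [reflexivity|].
  rewrite !act_cons, step_addc. apply IH.
Qed.

Definition Nset (beta : nat -> bool) (w : word) : Prop :=
  reduced w /\ exists z : nat -> bool, (forall j, beta j = false -> z j = false) /\
    forall s, act w s = addc z s.

Lemma Nset_normal beta : is_normal_subgroup (Nset beta).
Proof.
  constructor.
  - intros w [H _]; exact H.
  - split; [exact I|]. exists (fun _ => false). split; [auto|].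
    intros [[m x] f]; simpl. f_equal. apply functional_extensionality; intro j.
    destruct (f j); reflexivity.
  - intros u v [_ [zu [Hzu Hu]]] [_ [zv [Hzv Hv]]]. split; [apply reduced_reduce|].
    exists (fun j => xorb (zu j) (zv j)). split.
    + intros j Hj. rewrite Hzu, Hzv; auto.
    + intro s. unfold fmul. rewrite act_reduce, act_app, Hu, Hv. apply addc_addc.
  - intros u [Hr [z [Hz Hu]]]. split; [apply reduced_finv; exact Hr|].
    exists z. split; [exact Hz|]. intro s.
    rewrite <- (addc_invol z s) at 1. rewrite <- Hu. apply act_finv.
  - intros g u _ [_ [z [Hz Hu]]]. split; [apply reduced_reduce|].
    exists z. split; [exact Hz|]. intro s. unfold fmul.
    rewrite !act_reduce, !act_app, act_reduce, act_app, Hu, act_addc, act_finv. reflexivity.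
Qed.

Definition Phi (beta : nat -> bool) : G2 := exist _ (Nset beta) (Nset_normal beta).

Definition LB : letter := (gb, false).
Definition LA : letter := (ga, false).
Definition LAi : letter := (ga, true).

Lemma act_repA k m x f : act (repeat LA k) (m, x, f) = ((m + Z.of_nat k)%Z, x, f).
Proof.
  revert m; induction k as [|k IH]; intro m; simpl.
  - f_equal; f_equal; lia.
  - rewrite IH. f_equal; f_equal; lia.
Qed.

Lemma act_repAi k m x f : act (repeat LAi k) (m, x, f) = ((m - Z.of_nat k)%Z, x, f).
Proof.
  revert m; induction k as [|k IH]; intro m; simpl.
  - f_equal; f_equal; lia.
  - rewrite IH. f_equal; f_equal; lia.
Qed.

Definition cw (n : nat) : word :=
  [LB] ++ repeat LA (S n) ++ [LB] ++ repeat LAi (S n) ++ [LB] ++ repeat LA (S n) ++ [LB] ++ repeat LAi (S n).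

Definition en (n : nat) : nat -> bool := fun j => Nat.eqb j n.

Lemma act_B m x f : act [LB] (m, x, f) =
  (m, updz x m, fun j => xorb (f j) (x (m - Z.of_nat (S j))%Z)).
Proof. reflexivity. Qed.

Lemma act_cw n s : act (cw n) s = addc (en n) s.
Proof.
  destruct s as [[m x] f]. unfold cw.
  rewrite !act_app, act_B, act_repA, act_B, act_repAi, act_B, act_repA, act_B, act_repAi.
  unfold addc.
  set (k := Z.of_nat (S n)).
  replace (m + k - k)%Z with m by lia.
  f_equal; [f_equal|].
  - lia.
  - apply functional_extensionality; intro p; unfold updz.
    repeat match goal with |- context [Z.eqb ?a ?b] => destruct (Z.eqb_spec a b) end;
      try lia; destruct (x p); reflexivity.
  - apply functional_extensionality; intro j; unfold updz, en.
    destruct (Nat.eqb_spec j n) as [->|Hjn].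
    + replace (m + k - Z.of_nat (S n))%Z with m by (unfold k; lia).
      repeat match goal with |- context [Z.eqb ?a ?b] => destruct (Z.eqb_spec a b) end;
        try (unfold k in *; lia).
      destruct (f n), (x m), (x (m - Z.of_nat (S n))%Z); reflexivity.
    + repeat match goal with |- context [Z.eqb ?a ?b] => destruct (Z.eqb_spec a b) end;
        try (unfold k in *; lia).
      destruct (f j), (x (m - Z.of_nat (S j))%Z), (x (m + k - Z.of_nat (S j))%Z); reflexivity.
Qed.

Lemma Nset_cw beta n : Nset beta (reduce (cw n)) <-> beta n = true.
Proof.
  split.
  - intros [_ [z [Hz H]]].
    specialize (H (0%Z, fun _ => false, fun _ => false)).
    rewrite act_reduce, act_cw in H. simpl in H.
    injection H as H.
    apply (f_equal (fun g => g n)) in H. simpl in H.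
    unfold en in H. rewrite Nat.eqb_refl in H. simpl in H. rename H into Hn.
    destruct (beta n) eqn:E; [reflexivity|]. rewrite (Hz n E) in Hn. discriminate.
  - intro Hb. split; [apply reduced_reduce|]. exists (en n). split.
    + intros j Hj. unfold en. destruct (Nat.eqb_spec j n); [subst; congruence|reflexivity].
    + intro s. rewrite act_reduce. apply act_cw.
Qed.

Lemma length_cw n : length (cw n) = (4 * n + 8)%nat.
Proof. unfold cw. rewrite !length_app, !repeat_length. simpl. lia. Qed.

Lemma agree_0 N1 N2 : agree 0 N1 N2.
Proof. intros w _ H; lia. Qed.

Lemma agree_ex n N1 N2 : ~ agree n N1 N2 -> exists l, agree l N1 N2 /\ ~ agree (S l) N1 N2.
Proof.
  induction n as [|n IH]; intro H.
  - exfalso; apply H, agree_0.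
  - destruct (classic (agree n N1 N2)) as [Ha|Ha]; [exists n; auto| apply IH, Ha].
Qed.

Lemma dist_spec_ex N1 N2 : exists r, dist_spec N1 N2 r.
Proof.
  destruct (classic (same N1 N2)) as [Hs|Hs].
  - exists 0. left; auto.
  - apply not_all_ex_not in Hs. destruct Hs as [w Hw].
    assert (Hr : reduced w).
    { destruct N1 as [M1 HM1], N2 as [M2 HM2]; simpl in Hw.
      destruct (classic (M1 w)) as [H1|H1]; [exact (ns_reduced _ HM1 _ H1)|].
      destruct (classic (M2 w)) as [H2|H2]; [exact (ns_reduced _ HM2 _ H2)|].
      exfalso; apply Hw; tauto. }
    assert (Hna : ~ agree (S (length w)) N1 N2).
    { intro Ha. apply Hw, Ha; auto. }
    destruct (agree_ex _ _ _ Hna) as [l [H1 H2]].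
    exists (exp (- INR l)). right. exists l; auto.
Qed.

Lemma dist_lower N1 N2 w L : reduced w -> (length w <= L)%nat ->
  ~ (proj1_sig N1 w <-> proj1_sig N2 w) -> exp (- INR L) <= Defs.dist N1 N2.
Proof.
  intros Hr HL Hw.
  pose proof (epsilon_spec (inhabits 0) (dist_spec N1 N2) (dist_spec_ex N1 N2)) as Hs.
  fold (Defs.dist N1 N2) in Hs.
  destruct Hs as [[Hsame _]|[l [Ha [_ Hd]]]].
  - exfalso; apply Hw, Hsame.
  - rewrite Hd.
    assert (Hl : (l <= L)%nat).
    { destruct (Nat.le_gt_cases l (length w)); [lia|]. exfalso; apply Hw, Ha; auto. }
    apply le_INR in Hl.
    destruct (Req_dec (INR l) (INR L)) as [E|E]; [rewrite E; lra|].
    left. apply exp_increasing. lra.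
Qed.

Lemma dist_Phi beta gamma n : beta n <> gamma n ->
  exp (- INR (4 * n + 8)) <= Defs.dist (Phi beta) (Phi gamma).
Proof.
  intro H. apply (dist_lower _ _ (reduce (cw n))).
  - apply reduced_reduce.
  - rewrite <- length_cw. apply length_reduce.
  - unfold Phi, proj1_sig. rewrite !Nset_cw. destruct (beta n), (gamma n); intuition congruence.
Qed.

Lemma pow2_pos k : 0 < 2 ^ k.
Proof. apply pow_lt; lra. Qed.

Lemma inv_pow_le a b : (b <= S a)%nat -> / 2 ^ a <= 2 * / 2 ^ b.
Proof.
  intro H.
  assert (H1 : 2 ^ b <= 2 ^ (S a)) by (apply Rle_pow; [lra|lia]).
  simpl in H1. pose proof (pow2_pos a). pose proof (pow2_pos b).
  assert (/ (2 * 2 ^ a) <= / 2 ^ b) by (apply Rinv_le_contravar; lra).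
  rewrite Rinv_mult in H3. lra.
Qed.

Lemma sum_nonneg f N : (forall i, 0 <= f i) -> 0 <= sum_f_R0 f N.
Proof. intro H; induction N; simpl; [apply H|]. specialize (H (S N)). lra. Qed.

Lemma sum_mono f N M : (forall i, 0 <= f i) -> (N <= M)%nat -> sum_f_R0 f N <= sum_f_R0 f M.
Proof.
  intros H HNM. induction HNM; [lra|]. simpl. specialize (H (S m)). lra.
Qed.

Lemma term_le_sum f i : (forall i, 0 <= f i) -> f i <= sum_f_R0 f i.
Proof.
  intro H. destruct i; simpl; [lra|]. pose proof (sum_nonneg f i H). lra.
Qed.

Definition hit (P : nat -> (nat -> bool) -> Prop) i n g :=
  exists d, P i d /\ forall j, (j < n)%nat -> d j = g j.

Definition rho P (K : nat -> nat) i n g : R :=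
  if excluded_middle_informative (hit P i n g) then / 2 ^ (K i - n) else 0.

Definition good P K n g := forall N, sum_f_R0 (fun i => rho P K i n g) N <= 3/4.

Definition updb (g : nat -> bool) n b : nat -> bool := fun j => if Nat.eqb j n then b else g j.

Lemma rho_nonneg P K i n g : 0 <= rho P K i n g.
Proof.
  unfold rho; destruct (excluded_middle_informative _); [|lra].
  left; apply Rinv_0_lt_compat, pow2_pos.
Qed.

Lemma hit_parent P i n g b : hit P i (S n) (updb g n b) -> hit P i n g.
Proof.
  intros [d [Hd Hj]]. exists d; split; [exact Hd|].
  intros j Hjn. rewrite Hj by lia. unfold updb.
  destruct (Nat.eqb_spec j n); [lia|reflexivity].
Qed.

Section Child.
Variable P : nat -> (nat -> bool) -> Prop.
Variable K : nat -> nat.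
Hypothesis Hcyl : forall i b g j, P i b -> P i g -> (j < K i)%nat -> b j = g j.

Lemma rho_child i n g :
  rho P K i (S n) (updb g n false) + rho P K i (S n) (updb g n true) <= 2 * rho P K i n g.
Proof.
  unfold rho.
  destruct (excluded_middle_informative (hit P i (S n) (updb g n false))) as [H0|H0];
  destruct (excluded_middle_informative (hit P i (S n) (updb g n true))) as [H1|H1];
  destruct (excluded_middle_informative (hit P i n g)) as [H|H];
  try (exfalso; apply H; eapply hit_parent; eassumption).
  - destruct (le_lt_dec (K i) n) as [Hle|Hlt].
    + replace (K i - S n)%nat with 0%nat by lia. replace (K i - n)%nat with 0%nat by lia.
      simpl. lra.
    + exfalso. destruct H0 as [d0 [Hd0 Hj0]], H1 as [d1 [Hd1 Hj1]].
      pose proof (Hcyl i d0 d1 n Hd0 Hd1 Hlt) as E.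
      rewrite Hj0, Hj1 in E by lia. unfold updb in E. rewrite Nat.eqb_refl in E. discriminate.
  - pose proof (inv_pow_le (K i - S n) (K i - n) ltac:(lia)). lra.
  - pose proof (inv_pow_le (K i - S n) (K i - n) ltac:(lia)). lra.
  - pose proof (pow2_pos (K i - n)). pose proof (Rinv_0_lt_compat _ H2). lra.
  - lra.
Qed.

Lemma sum_child n g N :
  sum_f_R0 (fun i => rho P K i (S n) (updb g n false)) N +
  sum_f_R0 (fun i => rho P K i (S n) (updb g n true)) N <=
  2 * sum_f_R0 (fun i => rho P K i n g) N.
Proof.
  induction N; simpl; [apply rho_child|].
  pose proof (rho_child (S N) n g). lra.
Qed.

Lemma good_child n g : good P K n g ->
  good P K (S n) (updb g n false) \/ good P K (S n) (updb g n true).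
Proof.
  intro Hg. apply NNPP. intro Hn. apply not_or_and in Hn. destruct Hn as [H0 H1].
  unfold good in H0, H1. apply not_all_ex_not in H0. apply not_all_ex_not in H1.
  destruct H0 as [N0 H0], H1 as [N1 H1]. apply Rnot_le_lt in H0. apply Rnot_le_lt in H1.
  pose proof (sum_mono (fun i => rho P K i (S n) (updb g n false)) N0 (Nat.max N0 N1)
    (fun i => rho_nonneg _ _ _ _ _) (Nat.le_max_l _ _)).
  pose proof (sum_mono (fun i => rho P K i (S n) (updb g n true)) N1 (Nat.max N0 N1)
    (fun i => rho_nonneg _ _ _ _ _) (Nat.le_max_r _ _)).
  pose proof (sum_child n g (Nat.max N0 N1)). pose proof (Hg (Nat.max N0 N1)). lra.
Qed.

Fixpoint F (n : nat) : nat -> bool :=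
  match n with
  | O => fun _ => false
  | S n => if excluded_middle_informative (good P K (S n) (updb (F n) n false))
           then updb (F n) n false else updb (F n) n true
  end.

Lemma F_good n : good P K 0 (fun _ => false) -> good P K n (F n).
Proof.
  intro H0. induction n as [|n IH]; [exact H0|]. simpl.
  destruct (excluded_middle_informative _) as [H|H]; [exact H|].
  destruct (good_child n (F n) IH); tauto.
Qed.

Definition betaF : nat -> bool := fun j => F (S j) j.

Lemma F_beta n j : (j < n)%nat -> F n j = betaF j.
Proof.
  induction n as [|n IH]; intro Hj; [lia|].
  destruct (Nat.eq_dec j n) as [->|Hne]; [reflexivity|].
  simpl. destruct (excluded_middle_informative _); unfold updb;
  destruct (Nat.eqb_spec j n); try lia; apply IH; lia.
Qed.

Lemma no_cover : (forall N, sum_f_R0 (fun i => / 2 ^ K i) N <= 3/4) ->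
  exists beta, forall i, ~ P i beta.
Proof.
  intro Hs. exists betaF. intros i Hi.
  assert (H0 : good P K 0 (fun _ => false)).
  { intro N. eapply Rle_trans; [|apply (Hs N)]. apply sum_Rle. intros k _.
    unfold rho. destruct (excluded_middle_informative _);
      [rewrite Nat.sub_0_r; lra| left; apply Rinv_0_lt_compat, pow2_pos]. }
  pose proof (F_good (K i) H0 i) as Hg.
  pose proof (term_le_sum (fun k => rho P K k (K i) (F (K i))) i (fun k => rho_nonneg _ _ _ _ _)).
  assert (rho P K i (K i) (F (K i)) = 1).
  { unfold rho. destruct (excluded_middle_informative _) as [_|Hn].
    - rewrite Nat.sub_diag. simpl. lra.
    - exfalso; apply Hn. exists betaF. split; [exact Hi|]. intros j Hj. symmetry; apply F_beta, Hj. }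
  simpl in H. lra.
Qed.
End Child.

Lemma exp_le_mono a b : a <= b -> exp a <= exp b.
Proof. intro H. destruct (Req_dec a b) as [->|E]; [lra|]. left; apply exp_increasing; lra. Qed.

Lemma hpow_nonneg r s : 0 <= hpow r s.
Proof. unfold hpow. destruct (Rlt_dec 0 r); [unfold Rpower; left; apply exp_pos|lra]. Qed.

Lemma inv_pow_succ n : / 2 ^ (S n) = / 2 * / 2 ^ n.
Proof. simpl. rewrite Rinv_mult. reflexivity. Qed.

Theorem corollary6p7 :
  hausdorff_dim_ge (fun _ : G2 => True) (ln 2 / 6).
Proof.
  intros s Hs Hnull.
  destruct (Rle_lt_dec (ln 2 / 6) s) as [Hle|Hlt]; [exact Hle|exfalso].
  assert (Hln2 : 0 < ln 2) by (rewrite <- ln_1; apply ln_increasing; lra).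
  assert (Hs4 : s < ln 2 / 4) by lra.
  destruct (Hnull 1 (1/8) ltac:(lra) ltac:(lra)) as [U [r [Hcov [Hr [Hdiam Hsum]]]]].
  set (P := fun i b => U i (Phi b)).
  assert (HK : forall i, exists K : nat,
    (forall b g j, P i b -> P i g -> (j < K)%nat -> b j = g j) /\
    / 2 ^ K <= 4 * hpow (r i) s + / 2 ^ (i + 3)).
  { intro i. pose proof (hpow_nonneg (r i) s) as Hh.
    pose proof (pow2_pos (i + 3)) as Hp. pose proof (Rinv_0_lt_compat _ Hp) as Hp'.
    destruct (Rlt_le_dec 0 (r i)) as [Hri|Hri].
    - set (Q := fun K : nat => exp (- INR (4 * K + 8)) <= r i).
      assert (HQ : exists K, Q K).
      { destruct (INR_unbounded (- ln (r i))) as [n Hn]. exists n. unfold Q.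
        apply Rle_trans with (exp (- INR n)).
        - apply exp_le_mono. pose proof (le_INR n (4 * n + 8) ltac:(lia)). lra.
        - rewrite <- (exp_ln (r i) Hri). apply exp_le_mono. lra. }
      destruct (Wf_nat.dec_inh_nat_subset_has_unique_least_element Q (fun n => classic (Q n)) HQ)
        as [K [[HQK HKmin] _]].
      exists K. split.
      + intros b g j Hb Hg Hj. destruct (bool_dec (b j) (g j)) as [E|E]; [exact E|].
        exfalso. pose proof (dist_Phi b g j E) as Hd.
        pose proof (Hdiam i _ _ Hb Hg) as Hd2.
        assert (Q j) by (unfold Q; lra). specialize (HKmin j H). lia.
      + unfold hpow. destruct (Rlt_dec 0 (r i)) as [_|Hn]; [|lra].
        unfold Rpower.
        assert (Hlnr : - INR (4 * K + 8) <= ln (r i)).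
        { destruct (Rle_lt_dec (- INR (4 * K + 8)) (ln (r i))) as [E|E]; [exact E|].
          exfalso. apply exp_increasing in E. rewrite exp_ln in E by exact Hri.
          unfold Q in HQK. lra. }
        assert (HX : INR (4 * K + 8) = 4 * (INR K + 2)).
        { rewrite plus_INR, mult_INR. simpl. lra. }
        assert (Hstep : - (INR (K + 2) * ln 2) <= s * ln (r i)).
        { rewrite HX in Hlnr. rewrite plus_INR. simpl (INR 2).
          pose proof (pos_INR K).
          apply Rle_trans with (s * (- (4 * (INR K + 2)))); [|apply Rmult_le_compat_l; lra].
          nra. }
        apply exp_le_mono in Hstep.
        rewrite exp_Ropp in Hstep. fold (Rpower 2 (INR (K + 2))) in Hstep.
        rewrite Rpower_pow in Hstep by lra.
        rewrite Nat.add_comm in Hstep. simpl (2 ^ (2 + K)) in Hstep.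
        pose proof (pow2_pos K).
        rewrite !Rinv_mult in Hstep. lra.
    - exists (i + 3)%nat. split; [|lra].
      intros b g j Hb Hg Hj. destruct (bool_dec (b j) (g j)) as [E|E]; [exact E|].
      exfalso. pose proof (dist_Phi b g j E) as Hd.
      pose proof (Hdiam i _ _ Hb Hg) as Hd2. pose proof (exp_pos (- INR (4 * j + 8))). lra. }
  set (K := fun i => proj1_sig (constructive_indefinite_description _ (HK i))).
  assert (HKs : forall i, (forall b g j, P i b -> P i g -> (j < K i)%nat -> b j = g j) /\
      / 2 ^ K i <= 4 * hpow (r i) s + / 2 ^ (i + 3)).
  { intro i. unfold K. destruct (constructive_indefinite_description _ (HK i)) as [k Hk]. exact Hk. }
  assert (Hgeo : forall N, sum_f_R0 (fun i => / 2 ^ K i) N <=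
     4 * sum_f_R0 (fun i => hpow (r i) s) N + (1/4 - / 2 ^ (N + 3))).
  { induction N as [|N IH].
    - simpl sum_f_R0. destruct (HKs 0%nat) as [_ H]. simpl in H |- *. lra.
    - simpl sum_f_R0. destruct (HKs (S N)) as [_ H].
      replace (S N + 3)%nat with (S (N + 3)) in * by lia.
      rewrite inv_pow_succ in *. lra. }
  destruct (no_cover P K (fun i => proj1 (HKs i))) as [beta Hb].
  - intro N. pose proof (Hgeo N). pose proof (Hsum N).
    pose proof (pow2_pos (N + 3)). pose proof (Rinv_0_lt_compat _ H1). lra.
  - destruct (Hcov (Phi beta) I) as [i Hi]. exact (Hb i Hi).
Qed.
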